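(* Under the standing setting and assumptions (A1)–(A3) described in the context, the following are equivalent: (a) $\mathcal R(X)\neq\emptyset$ for every $X\in\mathcal X$; (b) $\mathcal R(X)\neq\emptyset$ for every $X\in\partial(\mathcal A+\ker(\pi))$; (c) $\mathcal A+\ker(\pi)$ is closed.
   Context: Let $\mathcal X$ be a Hausdorff, first countable, locally convex topological vector space over $\mathbb R$, partially ordered by a partial order $\geq$ with positive cone $\mathcal X_+=\{X\in\mathcal X: X\geq 0\}$. Let $\mathcal M\subset\mathcal X$ be a vector subspace with $1<\dim\mathcal M<\infty$, carrying the relative topology, and let $\pi:\mathcal M\to\mathbb R$ be linear with $\ker(\pi)=\{Z\in\mathcal M:\pi(Z)=0\}$. Standing assumptions: (A1) there is $U\in\mathcal M\cap\mathcal X_+$ with $\pi(U)=1$; (A2) $\mathcal A\subsetneq\mathcal X$ is closed, contains $0$, and satisfies $\mathcal A+\mathcal X_+\subset\mathcal A$; (A3) the map $\rho(X)=\inf\{\pi(Z): Z\in\mathcal M,\ X+Z\in\mathcal A\}$ is finitely valued and continuous on $\mathcal X$. The optimal payoff map is $\mathcal R(X)=\{Z\in\mathcal M: X+Z\in\mathcal A,\ \pi(Z)=\rho(X)\}$. $\partial$ denotes boundary in $\mathcal X$. *)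

(* Defs.v *)
From HB Require Import structures.
From mathcomp Require Import all_boot all_order all_algebra.
From mathcomp Require Import all_classical all_reals all_analysis.
Set Implicit Arguments.
Unset Strict Implicit.
Unset Printing Implicit Defensive.
Import Order.TTheory GRing.Theory Num.Theory.
Local Open Scope classical_set_scope.
Local Open Scope ring_scope.

Definition first_countable (T : topologicalType) : Prop :=
  forall x : T, exists B : set_system T,
    [/\ countable B, (forall V, B V -> nbhs x V) &
        (forall U, nbhs x U -> exists2 V, B V & V `<=` U)].

Definition boundary (T : topologicalType) (S : set T) : set T :=
  closure S `\` interior S.

Definition mink_sum (V : zmodType) (A B : set V) : set V :=
  [set a + b | a in A & b in B].

Definition ordered_vector_space (R : numDomainType) (V : lmodType R)
  (le : V -> V -> Prop) : Prop :=
  [/\ (forall x, le x x),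
      (forall x y, le x y -> le y x -> x = y),
      (forall x y z, le x y -> le y z -> le x z),
      (forall x y z, le x y -> le (x + z) (y + z)) &
      (forall (a : R) x y, 0 <= a -> le x y -> le (a *: x) (a *: y))].

Definition pos_cone (R : numDomainType) (V : lmodType R)
  (le : V -> V -> Prop) : set V := [set x | le 0 x].

Definition is_subspace (R : numDomainType) (V : lmodType R) (M : set V) : Prop :=
  [/\ M 0, (forall x y, M x -> M y -> M (x + y)) &
      (forall (a : R) x, M x -> M (a *: x))].

Definition has_dim (R : numDomainType) (V : lmodType R) (M : set V) (n : nat) : Prop :=
  exists b : 'I_n -> V,
    (forall c : 'I_n -> R, \sum_(i < n) c i *: b i = 0 -> forall i, c i = 0) /\
    M = [set x | exists c : 'I_n -> R, x = \sum_(i < n) c i *: b i].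

Definition linear_on (R : numDomainType) (V : lmodType R) (M : set V) (pi : V -> R) : Prop :=
  (forall x y, M x -> M y -> pi (x + y) = pi x + pi y) /\
  (forall (a : R) x, M x -> pi (a *: x) = a * pi x).

Definition kerM (R : numDomainType) (V : lmodType R) (M : set V) (pi : V -> R) : set V :=
  [set z | M z /\ pi z = 0].

Definition rho (R : realType) (V : lmodType R) (M A : set V) (pi : V -> R) (x : V)
  : \bar R :=
  ereal_inf [set (pi z)%:E | z in [set z | M z /\ A (x + z)]].

Definition optimal_payoffs (R : realType) (V : lmodType R) (M A : set V) (pi : V -> R)
  (x : V) : set V :=
  [set z | [/\ M z, A (x + z) & (pi z)%:E = rho M A pi x]].

(* Main.v *)
Require Import Defs.
From HB Require Import structures.
From mathcomp Require Import all_boot all_order all_algebra.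
From mathcomp Require Import all_classical all_reals all_analysis.
Import Order.TTheory GRing.Theory Num.Theory.
Local Open Scope classical_set_scope.
Local Open Scope ring_scope.
Lemma lin_cont (R : realType) (X : tvsType R) (x u : X) :
  continuous (fun t : R^o => x + t *: u).
Proof.
move=> t.
have h1 : {for t, continuous (fun s : R^o => (s, u))}.
  have := @cvg_pair _ _ _ (nbhs t) (nbhs t) (nbhs u) _ _ _ id (fun=> u) cvg_id (cvg_cst u).
  exact.
have h2 : {for t, continuous (fun s : R^o => s *: u)}.
  exact: (continuous_comp h1 (@scale_continuous R X (t, u))).
have h3 : {for t, continuous (fun s : R^o => (x, s *: u))}.
  have := @cvg_pair _ _ _ (nbhs t) (nbhs x) (nbhs (t *: u)) _ _ _ (fun=> x) (fun s : R^o => s *: u) (cvg_cst x) h2.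
  exact.
exact: (continuous_comp h3 (@add_continuous X (x, t *: u))).
Qed.


Lemma shift_lem (R : realType) (X : tvsType R) (le : X -> X -> Prop)
  (M : set X) (pi : X -> R) (A : set X) (U x z : X) (t : R) :
  ordered_vector_space le -> is_subspace M -> linear_on M pi ->
  M U -> pos_cone le U -> pi U = 1 ->
  mink_sum A (pos_cone le) `<=` A ->
  M z -> A (x + z) -> pi z <= t -> mink_sum A (kerM M pi) (x + t *: U).
Proof.
move=> [_ _ _ _ leZ] [M0 MD MZ] [piD piZ] MU U0 piU sA Mz Axz hz.
exists (x + z + (t - pi z) *: U).
  apply: sA; exists (x + z) => //; exists ((t - pi z) *: U) => //.
  rewrite /pos_cone /=. have := leZ (t - pi z) 0 U; rewrite scaler0; apply => //.
  by rewrite subr_ge0.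
exists (pi z *: U - z).
  have Mnz : M (- z) by rewrite -scaleN1r; apply: MZ.
  split; first by apply: MD => //; apply: MZ.
  rewrite piD //; last by apply: MZ.
  rewrite piZ // piU mulr1 -scaleN1r piZ //. by rewrite mulN1r subrr.
rewrite scalerBl; set a := t *: U; set b := pi z *: U;
   by rewrite -!addrA; congr (_ + _); rewrite addKr addrC subrK.
Qed.

Theorem mainTheorem7 (R : realType) (X : tvsType R) (le : X -> X -> Prop)
  (M : set X) (n : nat) (pi : X -> R) (A : set X) :
  hausdorff_space X -> first_countable X ->
  ordered_vector_space le ->
  is_subspace M -> has_dim M n -> (1 < n)%N ->
  linear_on M pi ->
  (* (A1) *)
  (exists U, [/\ M U, pos_cone le U & pi U = 1]) ->
  (* (A2) *)
  closed A -> A 0 -> ~ (A = setT) -> mink_sum A (pos_cone le) `<=` A ->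
  (* (A3) *)
  (forall x, rho M A pi x \is a fin_num) ->
  continuous (fun x : X => (fine (rho M A pi x) : R^o)) ->
  [<-> (forall x, optimal_payoffs M A pi x !=set0);
       (forall x, boundary (mink_sum A (kerM M pi)) x -> optimal_payoffs M A pi x !=set0);
       closed (mink_sum A (kerM M pi))].
Proof.
move=> _ _ ov sub _ _ lin [U [MU U0 piU]] _ _ _ sA fin cont.
have [M0 MD MZ] := sub; have [piD piZ] := lin.
set S := mink_sum A (kerM M pi).
tfae.
- by move=> h x _; apply: h.
- move=> h x clx.
  have Sle : S `<=` (fun y => fine (rho M A pi y) : R^o) @^-1` [set r : R | r <= 0].
    move=> _ [a Aa [k [Mk pik] <-]] /=.
    have Mnk : M (- k) by rewrite -scaleN1r; apply: MZ.
    have : (rho M A pi (a + k) <= 0%:E)%E.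
      rewrite /rho; apply: ereal_inf_lbound; exists (- k) => //.
        by split => //; rewrite addrK.
      by rewrite -scaleN1r piZ // pik mulr0.
    by rewrite -(fineK (fin (a + k))) lee_fin.
  have clS : closed ((fun y => fine (rho M A pi y) : R^o) @^-1` [set r : R | r <= 0]).
    by apply: preimage_closed; [move=> y _; apply: cont | exact: closed_le].
  have rx : fine (rho M A pi x) <= 0 by apply: clS; apply: (closureS Sle).
  have [ix|nix] := pselect (interior S x); first exact: interior_subset.
  have [z [Mz Axz pz]] := h x (conj clx nix).
  have -> : x = x + 0 *: U by rewrite scale0r addr0.
  have HH := @shift_lem _ _ _ _ _ _ _ _ _ 0 ov sub lin MU U0 piU sA Mz Axz. apply: HH.
  by rewrite -lee_fin pz -(fineK (fin x)) lee_fin.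
- move=> cS x.
  set r := fine (rho M A pi x).
  have Sr : S (x + r *: U).
    apply: (@closed_cvg _ _ (r^'+) _ (fun t : R => x + t *: U) S cS); last first.
      apply: cvg_within_filter. exact: lin_cont.
    near=> t.
    have : (rho M A pi x < t%:E)%E.
      rewrite -(fineK (fin x)) lte_fin. near: t. exact: nbhs_right_gt.
    move=> /ereal_inf_lt [_ [z [Mz Axz] <-]]; rewrite lte_fin => hz.
    have HH := @shift_lem _ _ _ _ _ _ _ _ _ t ov sub lin MU U0 piU sA Mz Axz. exact: (HH (ltW hz)).
  case: Sr => a Aa [k [Mk pik] ak].
  have Mnk : M (- k) by rewrite -scaleN1r; apply: MZ.
  exists (r *: U - k); split.
  + by apply: MD => //; apply: MZ.
  + by rewrite addrA -ak addrK.
  + rewrite piD //; last exact: MZ.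
    by rewrite piZ // piU mulr1 -scaleN1r piZ // pik mulr0 addr0 /r fineK.
Unshelve. all: by end_near.
Qed.
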